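(* Consider the second-stage problem defined in the context, and suppose all its right-hand-side data are integers: the initial fill levels $d_i^0$, capacities $\overline{d}_i$, demands $f_{i,j}^{t,k}(\xi)$, prescribed in-progress journeys $w_{i,j}^{t,k}$ ($1-K\le t\le 0$), and load/unload actions $y_i^{+,t},y_i^{-,t}$. Then, even when the integrality constraint on $w$ is relaxed (so $w$ is real-valued), the resulting linear program, if feasible, has an integer-valued optimal solution.
   Context: Setting: a directed graph $\mathcal{G}_\text{SV}=(\mathcal{N}_\text{SV},\mathcal{E}_\text{SV})$ of possible shared-vehicle (SV) journeys, horizon $T$, maximum journey duration $K$, station capacities $\overline{d}_i$, initial fill levels $d_i^0$, and given load/unload actions $y_i^{+,t},y_i^{-,t}$ for $i\in\mathcal{N}_\text{SV}$, $t=1,\dots,T$ (zero at nodes where no action is defined). For a realization $\xi$, $f_{i,j}^{t,k}(\xi)\in\mathbb{N}$ is the demand for journeys from $i$ to $j$ starting at time $t$ with duration $k$, and $l_{i,j}^{t,k}(\cdot;\xi)$ is a convex piecewise affine function passing through the origin with breakpoints at the integers. The second-stage problem is $$V(y,\xi):=\min_w\ \sum_{t=1}^T\sum_{(i,j)\in\mathcal{E}_\text{SV}}\sum_{k=0}^K l_{i,j}^{t,k}(f_{i,j}^{t,k}(\xi)-w_{i,j}^{t,k};\xi)$$ subject to, for all $t=1,\dots,T$ and $i\in\mathcal{N}_\text{SV}$, $$0\le d_i^0+\sum_{\tau=1}^t\Big[\sum_{k=0}^K\Big(\sum_{(j,i)\in\mathcal{E}_\text{SV}}w_{j,i}^{\tau-k,k}-\sum_{(i,j)\in\mathcal{E}_\text{SV}}w_{i,j}^{\tau,k}\Big)+y_i^{-,\tau}-y_i^{+,\tau}\Big]\le\overline{d}_i,$$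 $0\le w_{i,j}^{t,k}\le f_{i,j}^{t,k}(\xi)$ for $t=1,\dots,T$, $k=0,\dots,K$, $(i,j)\in\mathcal{E}_\text{SV}$, with $w_{i,j}^{t,k}$ given (fixed data) for $1-K\le t\le 0$, $-t<k\le K$, and $w_{i,j}^{t,k}\in\mathbb{Z}$. *)

(* Defs.v *)
From HB Require Import structures.
From mathcomp Require Import all_boot all_order all_algebra.
From mathcomp Require Import reals.
Set Implicit Arguments. Unset Strict Implicit. Unset Printing Implicit Defensive.
Import Order.TTheory GRing.Theory Num.Theory.
Local Open Scope ring_scope.

Section SV.
Variable R : realType.

Definition convex_pwa_int (g : R -> R) : Prop :=
  g 0 = 0 /\
  (forall x y a : R, 0 <= a -> a <= 1 ->
      g (a * x + (1 - a) * y) <= a * g x + (1 - a) * g y) /\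
  (forall (n : int) (x : R), n%:~R <= x -> x <= (n + 1)%:~R ->
      g x = g n%:~R + (x - n%:~R) * (g (n + 1)%:~R - g n%:~R)).

Variables (N : finType) (E : rel N) (T K : nat).
Variables (d0 dbar : N -> int).
(* f t k i j : demand for journeys i -> j starting at time t, duration k *)
Variable f : nat -> nat -> N -> N -> nat.
(* wpast s k i j : prescribed in-progress journey w_{i,j}^{-s,k}, i.e. start
   time t = -s with 1-K <= t <= 0 *)
Variable wpast : nat -> nat -> N -> N -> int.
Variables (yp ym : nat -> N -> int).
Variable l : nat -> nat -> N -> N -> R -> R.

(* decision variable w t k i j = w_{i,j}^{t,k}, meaningful for 1 <= t <= T *)
Definition Wfull (w : nat -> nat -> N -> N -> R) (tau k : nat) (j i : N) : R :=
  if (k < tau)%N then w (tau - k)%N k j i else (wpast (k - tau) k j i)%:~R.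

Definition inflow (w : nat -> nat -> N -> N -> R) (tau : nat) (i : N) : R :=
  \sum_(k < K.+1) \sum_(j | E j i) Wfull w tau k j i.

Definition outflow (w : nat -> nat -> N -> N -> R) (tau : nat) (i : N) : R :=
  \sum_(k < K.+1) \sum_(j | E i j) w tau k i j.

Definition level (w : nat -> nat -> N -> N -> R) (t : nat) (i : N) : R :=
  (d0 i)%:~R + \sum_(1 <= tau < t.+1)
     (inflow w tau i - outflow w tau i + (ym tau i)%:~R - (yp tau i)%:~R).

Definition feasible (w : nat -> nat -> N -> N -> R) : Prop :=
  (forall (t : nat) (i : N), (1 <= t)%N -> (t <= T)%N ->
      0 <= level w t i /\ level w t i <= (dbar i)%:~R) /\
  (forall (t k : nat) (i j : N), (1 <= t)%N -> (t <= T)%N -> (k <= K)%N ->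
      E i j -> 0 <= w t k i j /\ w t k i j <= (f t k i j)%:R).

Definition cost (w : nat -> nat -> N -> N -> R) : R :=
  \sum_(1 <= t < T.+1) \sum_(i : N) \sum_(j | E i j) \sum_(k < K.+1)
     l t k i j ((f t k i j)%:R - w t k i j).

End SV.

(* Main.v *)
From Pilot Require Import Defs.
From HB Require Import structures.
From mathcomp Require Import all_boot all_order all_algebra.
From mathcomp Require Import reals.
From mathcomp Require Import zify ring lra.
From Stdlib Require Import FunctionalExtensionality.
Import Order.TTheory GRing.Theory Num.Theory.
Local Open Scope ring_scope.

Module PilotHelpers.
Set Implicit Arguments. Unset Strict Implicit. Unset Printing Implicit Defensive.

Lemma kernel_exists (R : fieldType) (A V : finType) (S : {set V}) (F : {set A})
  (M : V -> A -> R) :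
  (#|S| < #|F|)%N -> exists d : A -> R, (forall a, a \notin F -> d a = 0) /\
    (exists a, d a != 0) /\
    forall v, v \in S -> \sum_(a in F) M v a * d a = 0.
Proof.
move=> hSF.
pose B := \matrix_(i < #|F|, j < #|S|) M (enum_val j) (enum_val i).
have hK : kermx B != 0.
  rewrite -mxrank_eq0 mxrank_ker; have := rank_leq_col B.
  by move=> h; rewrite subn_eq0 -ltnNge (leq_ltn_trans h).
have [r hr] : exists r, row r (kermx B) != 0.
  apply/existsP; move: hK; apply: contraR; rewrite negb_exists => /forallP h.
  apply/eqP/row_matrixP => i; rewrite row0; exact/eqP/negPn/h.
set u := row r (kermx B) in hr.
have hu : u *m B = 0 by apply/eqP; rewrite -sub_kermx row_sub.
pose d a := if [pick i : 'I_#|F| | enum_val i == a] is Some i then u 0 i else 0.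
have dE i : d (enum_val i) = u 0 i.
  rewrite /d; case: pickP => [i' /eqP h|h]; first by rewrite (enum_val_inj h).
  by have := h i; rewrite eqxx.
exists d; split; [|split].
- move=> a aF; rewrite /d; case: pickP => [i' /eqP h|//].
  by move: aF; rewrite -h enum_valP.
- have [i hi] : exists i, u 0 i != 0.
    apply/existsP; move: hr; apply: contraR; rewrite negb_exists => /forallP h.
    apply/eqP/rowP => i; apply/eqP; rewrite [X in _ == X]mxE; exact/negPn/h.
  by exists (enum_val i); rewrite dE.
- move=> v vS; rewrite big_enum_val /=.
  transitivity ((u *m B) 0 (enum_rank_in vS v)); last by rewrite hu mxE.
  rewrite mxE; by apply: eq_bigr => i _; rewrite dE [B _ _]mxE (enum_rankK_in vS vS) mulrC.
Qed.

Section Net.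
Variables (R : realType) (A V : finType) (head tail : A -> option V).

Definition coef (v : V) (a : A) : R :=
  (head a == Some v)%:R - (tail a == Some v)%:R.
Definition net (x : A -> R) (v : V) : R := \sum_a coef v a * x a.

Lemma coef_int v a : coef v a \is a Num.int.
Proof. by rewrite /coef rpredB // natr_int. Qed.

Lemma netD (x y : A -> R) (s : R) v :
  net (fun a => x a + s * y a) v = net x v + s * net y v.
Proof.
rewrite /net mulr_sumr -big_split; apply: eq_bigr => a _.
by rewrite mulrDr mulrCA.
Qed.

Lemma sum_optnat (o : option V) : (\sum_v (o == Some v) = (o != None))%N.
Proof.
case: o => [w|]; last by rewrite big1.
rewrite (bigD1 w) //= eqxx big1 // => v /negbTE hv.
by apply/eqP; rewrite eqb0; apply/negP => /eqP [] /esym/eqP; rewrite hv.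
Qed.

Lemma sum_optR (o : option V) : \sum_v ((o == Some v)%:R : R) = (o != None)%:R.
Proof. by rewrite -natr_sum sum_optnat. Qed.

Lemma net_kernel (x : A -> R) :
  (forall v, net x v \is a Num.int) -> (exists a, x a \notin Num.int) ->
  exists d : A -> R, (forall a, x a \is a Num.int -> d a = 0) /\
    (exists a, d a != 0) /\ forall v, net d v = 0.
Proof.
move=> hint [a0 ha0].
set F := [set a | x a \notin Num.int].
have a0F : a0 \in F by rewrite inE.
have suppF (d : A -> R) : (forall a, a \notin F -> d a = 0) ->
    forall a, x a \is a Num.int -> d a = 0.
  by move=> h a ha; apply: h; rewrite inE negbK.
case: (boolP [exists a in F, head a == tail a]) => [/existsP [a /andP [aF /eqP hl]]|noloop].
  exists (fun b => (b == a)%:R); split; [|split].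
  - move=> b hb; case: eqP => // eba; move: aF; rewrite inE -eba hb //.
  - by exists a; rewrite eqxx oner_eq0.
  - move=> v; rewrite /net (bigD1 a) //= eqxx mulr1 big1 ?addr0.
      by rewrite /coef hl subrr.
    by move=> b /negbTE ->; rewrite mulr0.
have nl a : a \in F -> head a != tail a.
  by move=> aF; apply: contraNN noloop => h; apply/existsP; exists a; rewrite aF.
pose touch v a := (head a == Some v) || (tail a == Some v).
have coef0 v a : ~~ touch v a -> coef v a = 0.
  by rewrite /touch /coef negb_or => /andP [/negbTE -> /negbTE ->]; rewrite subrr.
have coef2 v a : a \in F -> touch v a -> coef v a * coef v a = 1.
  move=> aF; rewrite /touch /coef; case/orP => [/eqP h|/eqP h].
    have : tail a != Some v by rewrite -h eq_sym nl.
    by move/negbTE ->; rewrite h eqxx subr0 mulr1.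
  have : head a != Some v by rewrite -h nl.
  by move/negbTE ->; rewrite h eqxx sub0r mulrNN mulr1.
have other v a : a \in F -> touch v a ->
    exists2 a', a' \in F & (a' != a) && touch v a'.
  move=> aF ht; case: (boolP [exists a' in F, (a' != a) && touch v a']).
    by case/existsP => a' /andP [? ?]; exists a'.
  move=> hno; exfalso; move: (aF); rewrite inE => /negP; apply.
  have hrest : \sum_(b | b != a) coef v b * x b \is a Num.int.
    apply: rpred_sum => b hb; case: (boolP (b \in F)) => bF.
      rewrite coef0 ?mul0r ?int_num0 //.
      apply: contraNN hno => tb; apply/existsP; exists b; by rewrite bF hb tb.
    by rewrite rpredM ?coef_int //; move: bF; rewrite inE negbK.
  have e : x a = coef v a * (net x v - \sum_(b | b != a) coef v b * x b).
    by rewrite /net (bigD1 a) //= addrK mulrA coef2 ?mul1r.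
  by rewrite e rpredM ?coef_int // rpredB.
pose V' := [set v | [exists a in F, touch v a]].
pose deg v := (\sum_(a in F) ((head a == Some v) + (tail a == Some v)))%N.
have term1 v a : touch v a -> (1 <= (head a == Some v) + (tail a == Some v))%N.
  by rewrite /touch; case: (head a == _); case: (tail a == _).
have deg2 v : v \in V' -> (2 <= deg v)%N.
  rewrite inE => /existsP [a /andP [aF ta]].
  have [a' a'F /andP [na' ta']] := other v a aF ta.
  rewrite /deg (bigD1 a) //= (bigD1 a') /=; last by rewrite a'F.
  exact: leq_add (term1 _ _ ta) (leq_trans (term1 _ _ ta') (leq_addr _ _)).
have dsum : (\sum_v deg v = \sum_(a in F) ((head a != None) + (tail a != None)))%N.
  rewrite /deg exchange_big /=; apply: eq_bigr => a _.
  by rewrite big_split /= !sum_optnat.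
have lowV : (2 * #|V'| <= \sum_v deg v)%N.
  rewrite [X in (_ <= X)%N](bigID (mem V')) /=.
  apply: leq_trans (leq_addr _ _).
  rewrite mulnC -sum_nat_const; apply: leq_sum => v; exact: deg2.
have [S [hS hSv]] : exists S : {set V}, (#|S| < #|F|)%N /\
    forall d : A -> R, (forall a, a \notin F -> d a = 0) ->
    (forall v, v \in S -> \sum_(a in F) coef v a * d a = 0) ->
    forall v, net d v = 0.
  have netF (d : A -> R) v : (forall a, a \notin F -> d a = 0) ->
      net d v = \sum_(a in F) coef v a * d a.
    move=> hd; rewrite /net [RHS]big_mkcond; apply: eq_bigr => a _.
    by case: ifP => // /negbT /hd ->; rewrite mulr0.
  have outV (d : A -> R) v : v \notin V' -> \sum_(a in F) coef v a * d a = 0.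
    move=> hv; apply: big1 => a aF; rewrite coef0 ?mul0r //.
    by apply: contraNN hv => t; rewrite inE; apply/existsP; exists a; rewrite aF.
  case: (boolP [exists a in F, (head a == None) || (tail a == None)]).
    case/existsP => a1 /andP [a1F h1].
    exists V'; split.
      have : (\sum_(a in F) ((head a != None) + (tail a != None)) < 2 * #|F|)%N.
        have : (\sum_(a in F) (((head a != None) + (tail a != None)) + (a == a1)) <= \sum_(a in F) 2)%N.
          apply: leq_sum => a _; case: (eqVneq a a1) => [->|_].
            by move: h1; case: (head a1 == None); case: (tail a1 == None).
          by case: (head a != None); case: (tail a != None).
        rewrite big_split /= sum_nat_const.
        have -> : (\sum_(a in F) (a == a1) = 1)%N.
          by rewrite (bigD1 a1) //= eqxx big1 // => a /andP [_ /negbTE ->].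
        set s := (\sum_(a in F) _)%N; set c := #|F|; lia.
      rewrite -dsum; set s := (\sum_v _)%N; set c := #|F|; move: lowV; rewrite -/s; set c' := #|V'|; lia.
    move=> d hd hS v; rewrite netF //; case: (boolP (v \in V')) => hv; first exact: hS.
    exact: outV.
  rewrite negb_exists => /forallP nod.
  have both a : a \in F -> (head a != None) && (tail a != None).
    by move=> aF; have := nod a; rewrite aF negb_or.
  have [v0 hv0] : exists v0, head a0 = Some v0.
    by have := both a0 a0F; case: (head a0) => // v0 _; exists v0.
  have v0V : v0 \in V'.
    by rewrite inE; apply/existsP; exists a0; rewrite a0F /touch hv0 eqxx.
  exists (V' :\ v0); split.
    have e2 : (\sum_(a in F) ((head a != None) + (tail a != None)) = \sum_(a in F) 2)%N.
      by apply: eq_bigr => a aF; case/andP: (both a aF) => -> ->.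
    move: lowV; rewrite dsum e2 sum_nat_const (cardsD1 v0 V') v0V; lia.
  move=> d hd hS.
  have hne v : v != v0 -> net d v = 0.
    move=> nv; rewrite netF //; case: (boolP (v \in V')) => hv; last exact: outV.
    by apply: hS; rewrite in_setD1 nv.
  have tot : \sum_v net d v = 0.
    rewrite /net exchange_big /=; apply: big1 => a _.
    case: (boolP (a \in F)) => aF; last by rewrite (hd a aF) big1 // => v _; rewrite mulr0.
    rewrite -mulr_suml /coef sumrB !sum_optR; case/andP: (both a aF) => -> ->.
    by rewrite subrr mul0r.
  move=> v; case: (eqVneq v v0) => [->|]; last exact: hne.
  move: tot; rewrite (bigD1 v0) //= big1 ?addr0 // => v /hne; done.
have [d [hd0 [hdn hdS]]] := kernel_exists coef hS.
exists d; split; [exact: suppF|split => //].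
exact: hSv.
Qed.

End Net.

Section Step.
Variables (R : realType) (A : finType).

Lemma fl_bounds (y : R) : (Num.floor y)%:~R <= y <= (Num.floor y + 1)%:~R.
Proof. by rewrite Num.Theory.floor_le ltW // Num.Theory.floorD1_gt. Qed.

Lemma fl_strict (y : R) : y \notin Num.int ->
  (Num.floor y)%:~R < y < (Num.floor y + 1)%:~R.
Proof.
move=> hy; rewrite Num.Theory.floorD1_gt andbT lt_neqAle Num.Theory.floor_le andbT.
by apply: contraNN hy => /eqP <-; rewrite Num.Theory.intr_int.
Qed.

Lemma step (x e : A -> R) : (forall a, x a \is a Num.int -> e a = 0) ->
  (exists a, e a != 0) ->
  exists s : R, 0 < s /\
    (forall a, (Num.floor (x a))%:~R <= x a + s * e a <= (Num.floor (x a) + 1)%:~R) /\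
    exists a, x a \notin Num.int /\ x a + s * e a \is a Num.int.
Proof.
move=> supp [a0 ha0].
have nint a : e a != 0 -> x a \notin Num.int.
  by move=> h; apply: contraNN h => /supp ->.
pose P a := e a != 0.
pose r a := if 0 < e a then ((Num.floor (x a) + 1)%:~R - x a) / e a
            else (x a - (Num.floor (x a))%:~R) / (- e a).
have rpos a : P a -> 0 < r a.
  rewrite /P => hP; have := fl_strict (nint a hP); rewrite /r => /andP [h1 h2].
  case: ifP => he.
    by apply: divr_gt0; rewrite ?subr_gt0.
  apply: divr_gt0; rewrite ?subr_gt0 // oppr_gt0 lt_neqAle hP /=.
  by rewrite leNgt he.
have re a : P a -> x a + r a * e a =
    if 0 < e a then (Num.floor (x a) + 1)%:~R else (Num.floor (x a))%:~R.
  move=> hP; rewrite /r; case: ifP => _; first by rewrite divfK // addrC subrK.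
  rewrite invrN mulrN mulNr divfK //; lra.
have [as_ Pas minr] := @arg_minP _ _ _ a0 P r ha0.
set s := r as_.
exists s; split; first exact: rpos.
split.
  move=> a; case: (eqVneq (e a) 0) => [->|hea]; first by rewrite mulr0 addr0 fl_bounds.
  have hsr : s <= r a := minr a hea.
  have hs0 : 0 < s := rpos _ Pas.
  have := re a hea; have := fl_bounds (x a).
  case: ifP => he /andP [hl hu] hre.
    have : s * e a <= r a * e a by rewrite ler_pM2r.
    have : 0 <= s * e a by rewrite mulr_ge0 // ltW.
    lra.
  have hneg : e a < 0 by rewrite lt_neqAle hea /= leNgt he.
  have : r a * e a <= s * e a by rewrite ler_nM2r.
  have : s * e a <= 0 by rewrite mulr_ge0_le0 // ltW.
  lra.
exists as_; split; first exact: nint.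
by rewrite /s re //; case: ifP; rewrite Num.Theory.intr_int.
Qed.

End Step.


Section Round.
Variables (R : realType) (A V : finType) (head tail : A -> option V).
Variables (hi : A -> int) (b : V -> int) (c : A -> R -> R).
Hypothesis hc : forall a (n : int) (y : R), n%:~R <= y <= (n + 1)%:~R ->
  c a y = c a n%:~R + (y - n%:~R) * (c a (n + 1)%:~R - c a n%:~R).

Definition afeas (x : A -> R) :=
  (forall a, 0 <= x a <= (hi a)%:~R) /\ forall v, net head tail x v = (b v)%:~R.
Definition acost (x : A -> R) := \sum_a c a (x a).
Definition Fs (x : A -> R) := [set a | x a \notin Num.int].

Local Notation fl y := (Num.floor y).

Lemma push x e s : afeas x -> (forall a, x a \is a Num.int -> e a = 0) ->
  (forall v, net head tail e v = 0) ->
  (forall a, (fl (x a))%:~R <= x a + s * e a <= (fl (x a) + 1)%:~R) ->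
  afeas (fun a => x a + s * e a).
Proof.
move=> [hb hn] supp hne hbox; split=> [a|v]; last by rewrite netD hne mulr0 addr0.
case: (boolP (x a \is a Num.int)) => hx; first by rewrite supp // mulr0 addr0.
have /andP [l u] := hbox a; have /andP [h0 h1] := hb a.
apply/andP; split.
  by apply: le_trans l; rewrite ler0z Num.Theory.floor_ge0.
apply: le_trans u _; rewrite ler_int lezD1 Num.Theory.floor_lt_int lt_neqAle h1 andbT.
by apply: contraNN hx => /eqP ->; exact: Num.Theory.intr_int.
Qed.

Lemma cost_lin x e s :
  (forall a, (fl (x a))%:~R <= x a + s * e a <= (fl (x a) + 1)%:~R) ->
  acost (fun a => x a + s * e a) =
  acost x + s * \sum_a e a * (c a (fl (x a) + 1)%:~R - c a (fl (x a))%:~R).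
Proof.
move=> hbox; rewrite /acost mulr_sumr -big_split; apply: eq_bigr => a _ /=.
rewrite (hc a (hbox a)) (hc a (fl_bounds (x a))); ring.
Qed.

Lemma card_dec (x x' : A -> R) as_ : (forall a, x a \is a Num.int -> x' a = x a) ->
  x as_ \notin Num.int -> x' as_ \is a Num.int -> (#|Fs x'| < #|Fs x|)%N.
Proof.
move=> hsame hn hi'.
have sub : Fs x' \subset Fs x :\ as_.
  apply/subsetP => a; rewrite /Fs !inE => ha; apply/andP; split.
    by apply: contraNneq ha => ->.
  by apply: contraNN ha => h; rewrite hsame.
have := subset_leq_card sub; rewrite [X in (_ < X)%N](cardsD1 as_) /Fs inE hn.
by move=> h; rewrite add1n ltnS.
Qed.

Lemma round x : afeas x -> exists z : A -> int,
  afeas (fun a => (z a)%:~R) /\ acost (fun a => (z a)%:~R) <= acost x.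
Proof.
suff H : forall n x, afeas x -> (#|Fs x| <= n)%N -> exists z : A -> int,
  afeas (fun a => (z a)%:~R) /\ acost (fun a => (z a)%:~R) <= acost x.
  by move=> hx; exact: (H _ x hx (leqnn _)).
elim=> [|n IH] {}x hx hn.
all: case: (boolP [forall a, x a \is a Num.int]) => hall.
1,3: exists (fun a => fl (x a)).
1,2: have -> : (fun a => ((fl (x a))%:~R : R)) = x
       by apply: functional_extensionality => a; rewrite Num.Theory.floorK //; exact: (forallP hall).
1,2: by split.
  exfalso; move: hall; rewrite negb_forall => /existsP [a ha].
  by move: hn; rewrite leqn0 cards_eq0 => /eqP /setP /(_ a); rewrite !inE ha.
have [a1 ha1] : exists a, x a \notin Num.int.
  by move: hall; rewrite negb_forall => /existsP.
have hint v : net head tail x v \is a Num.int.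
  by case: hx => _ ->; exact: Num.Theory.intr_int.
have [d [dsupp [dnz dnet]]] := net_kernel hint (ex_intro _ a1 ha1).
have [s1 [s1p [box1 [b1 [nb1 ib1]]]]] := step dsupp dnz.
have nsupp a : x a \is a Num.int -> - d a = 0 by move=> /dsupp ->; rewrite oppr0.
have nnz : exists a, - d a != 0 by case: dnz => a ha; exists a; rewrite oppr_eq0.
have nnet v : net head tail (fun a => - d a) v = 0.
  rewrite /net; under eq_bigr do rewrite mulrN.
  by rewrite sumrN; have := dnet v; rewrite /net => ->; rewrite oppr0.
have [s2 [s2p [box2 [b2 [nb2 ib2]]]]] := step nsupp nnz.
set beta := \sum_a d a * (c a (fl (x a) + 1)%:~R - c a (fl (x a))%:~R).
have same1 e s (supp : forall a, x a \is a Num.int -> e a = 0) a :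
    x a \is a Num.int -> x a + s * e a = x a.
  by move=> /supp ->; rewrite mulr0 addr0.
case: (lerP beta 0) => hbeta.
  have hx' := push hx dsupp dnet box1.
  have hc' := card_dec (same1 _ s1 dsupp) nb1 ib1.
  have /(IH _ hx') [z [hz hzc]] : (#|Fs (fun a => (x a + s1 * d a)%R)| <= n)%N.
    by rewrite -ltnS; exact: leq_trans hc' hn.
  exists z; split => //; apply: le_trans hzc _.
  rewrite (cost_lin box1) -/beta.
  have := mulr_ge0_le0 (ltW s1p) hbeta; lra.
have hx' := push hx nsupp nnet box2.
have hc' := card_dec (same1 _ s2 nsupp) nb2 ib2.
have /(IH _ hx') [z [hz hzc]] : (#|Fs (fun a => (x a + s2 * - d a)%R)| <= n)%N.
  by rewrite -ltnS; exact: leq_trans hc' hn.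
exists z; split => //; apply: le_trans hzc _.
rewrite (cost_lin box2).
have -> : \sum_a - d a * (c a (fl (x a) + 1)%:~R - c a (fl (x a))%:~R) = - beta.
  by rewrite /beta -sumrN; apply: eq_bigr => a _; rewrite mulNr.
have := mulr_gt0 s2p hbeta; lra.
Qed.

Definition afeasb (x : A -> R) : bool :=
  [forall a, (0 <= x a) && (x a <= (hi a)%:~R)] &&
  [forall v, net head tail x v == (b v)%:~R].

Lemma afeasP x : afeasb x <-> afeas x.
Proof.
split.
  by case/andP => /forallP h1 /forallP h2; split => [a|v]; [exact: h1|exact/eqP/h2].
by case=> h1 h2; apply/andP; split; apply/forallP => ?; [exact: h1|exact/eqP/h2].
Qed.

Lemma opt : (exists x, afeas x) -> exists z : A -> int,
  afeas (fun a => (z a)%:~R) /\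
  forall x, afeas x -> acost (fun a => (z a)%:~R) <= acost x.
Proof.
case=> x0 hx0.
pose M := (\max_a `|hi a|)%N.
pose toR (g : {ffun A -> 'I_M.+1}) (a : A) : R := (g a : nat)%:R.
have enc (z : A -> int) : afeas (fun a => (z a)%:~R) ->
    exists g, afeasb (toR g) /\ toR g = (fun a => (z a)%:~R).
  move=> hz; exists [ffun a => inord `|z a|%N].
  have e : toR [ffun a => inord `|z a|%N] = (fun a => (z a)%:~R).
    apply: functional_extensionality => a; rewrite /toR ffunE inordK.
      case: hz => /(_ a) /andP [h0 _] _; rewrite ler0z in h0.
      by rewrite natr_absz ger0_norm.
    case: hz => /(_ a) /andP [h0 h1] _; rewrite ler0z in h0; rewrite ler_int in h1.
    rewrite ltnS; apply: leq_trans (leq_bigmax a); lia.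
  by split => //; rewrite e; apply/afeasP.
have [z0 [hz0 _]] := round hx0.
have [g0 [pg0 _]] := enc z0 hz0.
have [gm pgm minm] := @arg_minP _ _ _ g0 (fun g => afeasb (toR g))
  (fun g => acost (toR g)) pg0.
exists (fun a => (gm a : nat)%:Z).
have e : (fun a => ((gm a : nat)%:Z)%:~R : R) = toR gm.
  by apply: functional_extensionality => a.
rewrite e; split; first exact/afeasP.
move=> x hx; have [z [hz hzc]] := round hx; have [g [pg eg]] := enc z hz.
by apply: le_trans (minm g pg) _; rewrite eg.
Qed.

End Round.

Section Concrete.
Variables (R : realType) (N : finType) (E : rel N) (T K : nat) (d0 dbar : N -> int).
Variables (f : nat -> nat -> N -> N -> nat) (wpast : nat -> nat -> N -> N -> int).
Variables (yp ym : nat -> N -> int) (l : nat -> nat -> N -> N -> R -> R).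

Local Notation J := ('I_T * 'I_K.+1 * N * N)%type.
Local Notation Vt := ('I_T * N)%type.
Local Notation At := (J + Vt)%type.

Lemma sumJ (F : J -> R) : \sum_(p : J) F p =
  \sum_(t0 < T) \sum_(k < K.+1) \sum_(i : N) \sum_(j : N) F (t0, k, i, j).
Proof.
rewrite pair_bigA pair_bigA pair_bigA; apply: eq_bigr => -[[[t0 k] i] j] _ //.
Qed.

Lemma sumV (F : Vt -> R) : \sum_(p : Vt) F p = \sum_(t0 < T) \sum_(i : N) F (t0, i).
Proof. by rewrite pair_bigA; apply: eq_bigr => -[t0 i] _. Qed.

Lemma sum_if_eq (I : finType) (i0 : I) (G : I -> R) :
  \sum_i (if i == i0 then G i else 0) = G i0.
Proof. by rewrite -big_mkcond big_pred1_eq. Qed.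

Definition tailC (a : At) : option Vt :=
  match a with
  | inl (t0, k, i, j) => if E i j then Some (t0, i) else None
  | inr (t0, i) => Some (t0, i)
  end.
Definition headC (a : At) : option Vt :=
  match a with
  | inl (t0, k, i, j) =>
      if E i j then
        (if (insub (t0 + k)%N : option 'I_T) is Some t' then Some (t', j) else None)
      else None
  | inr (t0, i) => if (insub t0.+1 : option 'I_T) is Some t' then Some (t', i) else None
  end.
Definition hiC (a : At) : int :=
  match a with
  | inl (t0, k, i, j) => if E i j then (f t0.+1 k i j)%:Z else 0
  | inr (t0, i) => dbar i
  end.
Definition cC (a : At) : R -> R :=
  match a with
  | inl (t0, k, i, j) => fun y => if E i j then l t0.+1 k i j ((f t0.+1 k i j)%:R - y) else 0
  | inr (t0, i) => fun _ => 0
  end.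
Definition pastin (t : nat) (i : N) : int :=
  \sum_(k < K.+1) \sum_(j | E j i) (if (k < t)%N then 0 else wpast (k - t)%N k j i).
Definition bC (v : Vt) : int :=
  - (((v.1 == 0 :> nat)%:Z * d0 v.2) + pastin v.1.+1 v.2 + ym v.1.+1 v.2 - yp v.1.+1 v.2).

Definition xof (w : nat -> nat -> N -> N -> R) (a : At) : R :=
  match a with
  | inl (t0, k, i, j) => if E i j then w t0.+1 k i j else 0
  | inr (t0, i) => level E K d0 wpast yp ym w t0.+1 i
  end.

Local Notation Wt := (nat -> nat -> N -> N -> R).
Local Notation lev w := (@level R N E K d0 wpast yp ym w).

Lemma level0 (w : Wt) i : lev w 0 i = (d0 i)%:~R.
Proof. by rewrite /level big_geq // addr0. Qed.

Lemma levelS (w : Wt) t i : lev w t.+1 i = lev w t i +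
  (inflow E K wpast w t.+1 i - outflow E K w t.+1 i + (ym t.+1 i)%:~R - (yp t.+1 i)%:~R).
Proof. by rewrite /level big_nat_recr //= addrA. Qed.

Lemma inflowE (w : Wt) t i : inflow E K wpast w t i =
  \sum_(k < K.+1) \sum_(j | E j i) (if (k < t)%N then w (t - k)%N k j i else 0)
  + (pastin t i)%:~R.
Proof.
rewrite /inflow /pastin rmorph_sum -big_split; apply: eq_bigr => k _ /=.
rewrite rmorph_sum -big_split; apply: eq_bigr => j _ /=.
by rewrite /Wfull; case: ifP => _; rewrite ?addr0 ?add0r.
Qed.

Lemma someE (T0 : eqType) (a b : T0) : (Some a == Some b) = (a == b).
Proof. by []. Qed.

Lemma H1 (w : Wt) t0 i : \sum_(p : J)
  ((tailC (inl p) == Some (t0, i))%:R * xof w (inl p)) = outflow E K w t0.+1 i.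
Proof.
rewrite sumJ (bigD1 t0) //= [X in _ + X]big1 ?addr0; last first.
  move=> s ns; apply: big1 => k _; apply: big1 => i' _; apply: big1 => j _ /=.
  by case: (E i' j) => /=; rewrite ?someE ?xpair_eqE ?(negbTE ns) ?mul0r.
rewrite /outflow; apply: eq_bigr => k _.
rewrite (bigD1 i) //= [X in _ + X]big1 ?addr0; last first.
  move=> i' ni; apply: big1 => j _ /=.
  by case: (E i' j) => /=; rewrite ?someE ?xpair_eqE ?eqxx ?(negbTE ni) ?mul0r.
rewrite [RHS]big_mkcond /=; apply: eq_bigr => j _.
by case: (E i j) => /=; rewrite ?someE ?xpair_eqE ?eqxx /= ?mul1r ?mul0r.
Qed.

Lemma H3 (w : Wt) t0 i : \sum_(q : Vt)
  ((tailC (inr q) == Some (t0, i))%:R * xof w (inr q)) = lev w t0.+1 i.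
Proof.
rewrite (bigD1 (t0, i)) //= someE eqxx mul1r big1 ?addr0 // => -[s i'] nq /=.
by rewrite someE (negbTE nq) mul0r.
Qed.

Lemma insubS_eq (s : 'I_T) (i' : N) (t0 : 'I_T) i :
  ((if (insub s.+1 : option 'I_T) is Some t' then Some (t', i') else None) == Some (t0, i))
  = (s.+1 == t0 :> nat) && (i' == i).
Proof.
case: insubP => [t' _ ht'|hn] /=; first by rewrite someE xpair_eqE -val_eqE /= ht'.
by case: (s.+1 =P t0) => [e|//]; move: hn; rewrite e ltn_ord.
Qed.

Lemma H4 (w : Wt) (t0 : 'I_T) i : \sum_(q : Vt)
  ((headC (inr q) == Some (t0, i))%:R * xof w (inr q)) =
  if (t0 == 0 :> nat) then 0 else lev w t0 i.
Proof.
case: eqP => [e0|ne0].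
  by apply: big1 => -[s i'] _ /=; rewrite insubS_eq e0 /= mul0r.
have hm : (t0.-1 < T)%N by apply: leq_ltn_trans (leq_pred _) (ltn_ord t0).
rewrite (bigD1 (Ordinal hm, i)) //= prednK; last by lia.
rewrite valK eqxx mul1r.
rewrite big1 ?addr0 // => -[s i'] nq /=; rewrite insubS_eq.
case: (s.+1 =P t0) => es; case: (i' =P i) => ei; rewrite /= ?mul0r //.
by move: nq; rewrite xpair_eqE -val_eqE /= ei eqxx andbT -es /= eqxx.
Qed.

Lemma insubD_eq (s : 'I_T) (k : nat) (j' i' : N) (t0 : 'I_T) i :
  ((if E j' i' then (if (insub (s + k)%N : option 'I_T) is Some t' then Some (t', i') else None)
    else None) == Some (t0, i))
  = [&& E j' i', ((s + k)%N == t0 :> nat) & (i' == i)].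
Proof.
case: (E j' i') => //=.
case: insubP => [t' _ ht'|hn] /=; first by rewrite someE xpair_eqE -val_eqE /= ht'.
by case: ((s + k)%N =P t0) => [e|//]; move: hn; rewrite e ltn_ord.
Qed.

Lemma H2 (w : Wt) (t0 : 'I_T) i : \sum_(p : J)
  ((headC (inl p) == Some (t0, i))%:R * xof w (inl p)) =
  \sum_(k < K.+1) \sum_(j | E j i) (if (k < t0.+1)%N then w (t0.+1 - k)%N k j i else 0).
Proof.
rewrite sumJ exchange_big /=; apply: eq_bigr => k _.
rewrite exchange_big /= [RHS]big_mkcond /=; apply: eq_bigr => j _.
rewrite (eq_bigr (fun s : 'I_T => (if [&& E j i & ((s + k)%N == t0 :> nat)] then w s.+1 k j i else 0)));
  last first.
  move=> s _; rewrite (bigD1 i) //= insubD_eq eqxx andbT big1 ?addr0.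
    by case: (E j i) => /=; case: ((s + k)%N =P t0) => _; rewrite ?mul1r ?mul0r.
  move=> i' ni /=; rewrite insubD_eq (negbTE ni) !andbF mul0r //.
case: (E j i) => /=; last by rewrite big1.
case: ltnP => hk.
  rewrite -big_mkcond (eq_bigl (fun s : 'I_T => s == (t0 - k)%N :> nat)); last first.
    by move=> s /=; apply/eqP/eqP; lia.
  rewrite (big_ord1_eq _ (fun s => w s.+1 k j i)).
  have -> : (t0 - k < T)%N by apply: leq_ltn_trans (leq_subr _ _) (ltn_ord t0).
  by rewrite subSn.
by apply: big1 => s _; case: eqP => // e; lia.
Qed.

Lemma sum_coef (I : finType) (h t : I -> option Vt) (x : I -> R) v :
  \sum_a (((h a == Some v)%:R - (t a == Some v)%:R) * x a) =
  \sum_a ((h a == Some v)%:R * x a) - \sum_a ((t a == Some v)%:R * x a).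
Proof. by rewrite -sumrB; apply: eq_bigr => a _; rewrite mulrBl. Qed.

Lemma net_xof (w : Wt) v : net headC tailC (xof w) v = (bC v)%:~R.
Proof.
case: v => t0 i.
rewrite /net /coef big_sumType /=.
rewrite (sum_coef (fun p => headC (inl p)) (fun p => tailC (inl p))).
rewrite (sum_coef (fun p => headC (inr p)) (fun p => tailC (inr p))).
rewrite H1 H2 H3 H4 levelS inflowE.
have -> : (if (t0 == 0 :> nat) then 0 else lev w t0 i) =
    lev w t0 i - ((t0 == 0 :> nat)%:Z * d0 i)%:~R.
  case: (val t0 =P 0)%N => [e|e]; last by rewrite mul0r subr0.
  by rewrite e level0 mul1r subrr.
rewrite /bC /= mulrNz !mulrzDr !mulrNz.
lra.
Qed.

Local Notation feas w := (@feasible R N E T K d0 dbar f wpast yp ym w).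

Lemma feas_xof (w : Wt) : feas w -> forall a, 0 <= xof w a <= (hiC a)%:~R.
Proof.
case=> hl hw -[[[[t0 k] i] j]|[t0 i]] /=.
  case: ifP => hE; last by rewrite lexx.
  have [] := hw t0.+1 k i j (ltn0Sn _) (ltn_ord t0) (ltn_ord k) hE.
  by move=> -> ->.
by have [-> ->] := hl t0.+1 i (ltn0Sn _) (ltn_ord t0).
Qed.

Lemma xof_feas (w : Wt) : (forall a, 0 <= xof w a <= (hiC a)%:~R) -> feas w.
Proof.
move=> h; split.
  move=> t i h1 h2; have ht : (t.-1 < T)%N by lia.
  have := h (inr (Ordinal ht, i)); rewrite /= prednK; last by lia.
  by case/andP.
move=> t k i j h1 h2 hk hE; have ht : (t.-1 < T)%N by lia.
have hk' : (k < K.+1)%N by lia.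
have := h (inl (Ordinal ht, Ordinal hk', i, j)); rewrite /= prednK; last by lia.
by rewrite hE => /andP.
Qed.

Lemma cost_xof (w : Wt) : cost E T K f l w = acost cC (xof w).
Proof.
rewrite /acost big_sumType /= [X in _ = _ + X]big1 ?addr0; last by case.
rewrite sumJ /cost big_add1 /= big_mkord; apply: eq_bigr => t0 _.
rewrite [RHS]exchange_big /=; apply: eq_bigr => i _.
rewrite [RHS]exchange_big /= [LHS]big_mkcond /=; apply: eq_bigr => j _.
by case: (E i j) => //=; rewrite big1.
Qed.

Definition wof (z : At -> R) : Wt := fun t k i j =>
  if (0 < t)%N then
    (if (insub t.-1 : option 'I_T) is Some t0 then
       (if (insub k : option 'I_K.+1) is Some k0 then z (inl (t0, k0, i, j)) else 0)
     else 0)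
  else 0.

Lemma wofE z (t0 : 'I_T) (k : 'I_K.+1) i j : wof z t0.+1 k i j = z (inl (t0, k, i, j)).
Proof. by rewrite /wof /= !valK. Qed.

Lemma H3g (g : At -> R) t0 i : \sum_(q : Vt)
  ((tailC (inr q) == Some (t0, i))%:R * g (inr q)) = g (inr (t0, i)).
Proof.
rewrite (bigD1 (t0, i)) //= someE eqxx mul1r big1 ?addr0 // => -[s i'] nq /=.
by rewrite someE (negbTE nq) mul0r.
Qed.

Lemma H4g0 (g : At -> R) (t0 : 'I_T) i : val t0 = 0%N -> \sum_(q : Vt)
  ((headC (inr q) == Some (t0, i))%:R * g (inr q)) = 0.
Proof. by move=> e0; apply: big1 => -[s i'] _ /=; rewrite insubS_eq e0 /= mul0r. Qed.

Lemma H4gS (g : At -> R) (t0 s : 'I_T) i : (s.+1 = t0 :> nat) -> \sum_(q : Vt)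
  ((headC (inr q) == Some (t0, i))%:R * g (inr q)) = g (inr (s, i)).
Proof.
move=> hs; rewrite (bigD1 (s, i)) //= insubS_eq hs !eqxx /= mul1r big1 ?addr0 //.
move=> -[s' i'] nq /=; rewrite insubS_eq.
case: (s'.+1 =P t0) => es; case: (i' =P i) => ei; rewrite /= ?mul0r //.
have ess : s' == s by apply/eqP/val_inj => /=; lia.
by move: nq; rewrite xpair_eqE ess ei eqxx.
Qed.

Lemma netsplit (g : At -> R) v : net headC tailC g v =
  \sum_p @coef R _ _ headC tailC v (inl p) * g (inl p) +
  \sum_q @coef R _ _ headC tailC v (inr q) * g (inr q).
Proof. by rewrite /net big_sumType. Qed.

Lemma xof_wof z : afeas headC tailC hiC bC z -> xof (wof z) = z.
Proof.
move=> [hb hn].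
set y := xof (wof z).
have hJ p : y (inl p) = z (inl p).
  case: p => [[[t0 k] i] j]; rewrite /y /= wofE; case: ifP => // hE.
  have := hb (inl (t0, k, i, j)); rewrite /= hE => /andP [h1 h2].
  by apply/esym/eqP; rewrite eq_le h1 h2.
have hL v : \sum_q @coef R _ _ headC tailC v (inr q) * y (inr q) =
            \sum_q @coef R _ _ headC tailC v (inr q) * z (inr q).
  have := hn v; rewrite -(net_xof (wof z)) -/y !netsplit.
  have -> : \sum_p @coef R _ _ headC tailC v (inl p) * y (inl p) =
            \sum_p @coef R _ _ headC tailC v (inl p) * z (inl p).
    by apply: eq_bigr => p _; rewrite hJ.
  by move/addrI.
have hLv (s : 'I_T) i : y (inr (s, i)) = z (inr (s, i)).
  suff H : forall n (s : 'I_T), val s = n -> y (inr (s, i)) = z (inr (s, i)).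
    exact: H _ s erefl.
  elim=> [|n IH] s' hs.
    have := hL (s', i); rewrite /coef.
    rewrite !(sum_coef (fun q => headC (inr q)) (fun q => tailC (inr q))).
    by rewrite !H4g0 // !H3g !sub0r => /oppr_inj.
  have hn' : (n < T)%N by have := ltn_ord s'; rewrite hs; lia.
  have := hL (s', i); rewrite /coef.
  rewrite !(sum_coef (fun q => headC (inr q)) (fun q => tailC (inr q))).
  rewrite !(@H4gS _ s' (Ordinal hn') i (esym hs)) !H3g (IH (Ordinal hn')) //.
  by move/addrI/oppr_inj.
apply: functional_extensionality => -[p|[s i]]; [exact: hJ|exact: hLv].
Qed.

Lemma hcC (hl : forall t k i j, convex_pwa_int (l t k i j)) a (n : int) (y : R) :
  n%:~R <= y <= (n + 1)%:~R ->
  cC a y = cC a n%:~R + (y - n%:~R) * (cC a (n + 1)%:~R - cC a n%:~R).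
Proof.
case: a => [[[[t0 k] i] j]|[t0 i]] /= hy; last by rewrite subrr mulr0 addr0.
case: (E i j); last by rewrite subrr mulr0 addr0.
have [_ [_ pw]] := hl t0.+1 k i j.
set F := f t0.+1 k i j.
set m : int := F%:Z - n - 1.
have eF : ((F%:Z)%:~R : R) = F%:R by [].
have em : (m%:~R : R) = F%:R - n%:~R - 1 by rewrite /m !intrD !mulrNz eF.
have em1 : ((m + 1)%:~R : R) = F%:R - n%:~R by rewrite intrD em; lra.
case/andP: hy => hy1 hy2; rewrite intrD in hy2.
have h1 : m%:~R <= F%:R - y by rewrite em; lra.
have h2 : F%:R - y <= (m + 1)%:~R by rewrite em1; lra.
rewrite (pw m _ h1 h2) -em1.
have -> : F%:R - (n + 1)%:~R = m%:~R :> R by rewrite em intrD; lra.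
rewrite em; ring.
Qed.

Definition wofZ (z : At -> int) : nat -> nat -> N -> N -> int := fun t k i j =>
  if (0 < t)%N then
    (if (insub t.-1 : option 'I_T) is Some t0 then
       (if (insub k : option 'I_K.+1) is Some k0 then z (inl (t0, k0, i, j)) else 0)
     else 0)
  else 0.

Lemma wofZE (z : At -> int) :
  (fun t k i j => ((wofZ z t k i j)%:~R : R)) = wof (fun a => (z a)%:~R).
Proof.
apply: functional_extensionality => t; apply: functional_extensionality => k.
apply: functional_extensionality => i; apply: functional_extensionality => j.
rewrite /wofZ /wof; case: (0 < t)%N => //.
case: (insub t.-1) => // t0; by case: (insub k).
Qed.

Theorem main (hl : forall t k i j, convex_pwa_int (l t k i j)) :
  (exists w : nat -> nat -> N -> N -> R,
      feasible E T K d0 dbar f wpast yp ym w) ->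
  exists wz : nat -> nat -> N -> N -> int,
    let w := fun t k i j => (wz t k i j)%:~R : R in
    feasible E T K d0 dbar f wpast yp ym w /\
    forall w' : nat -> nat -> N -> N -> R,
      feasible E T K d0 dbar f wpast yp ym w' ->
      cost E T K f l w <= cost E T K f l w'.
Proof.
move=> [w0 hw0].
have hx0 : afeas headC tailC hiC bC (xof w0) := conj (feas_xof hw0) (net_xof w0).
have [z [hz hmin]] := @opt R _ _ headC tailC hiC bC cC (hcC hl) (ex_intro _ _ hx0).
exists (wofZ z); cbv zeta; rewrite wofZE; split.
  by apply: xof_feas; rewrite xof_wof //; case: hz.
move=> w' hw'; rewrite !cost_xof xof_wof //.
exact: hmin (conj (feas_xof hw') (net_xof w')).
Qed.

End Concrete.

End PilotHelpers.

Theorem proposition1 (R : realType) (N : finType) (E : rel N) (T K : nat)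
    (d0 dbar : N -> int) (f : nat -> nat -> N -> N -> nat)
    (wpast : nat -> nat -> N -> N -> int) (yp ym : nat -> N -> int)
    (l : nat -> nat -> N -> N -> R -> R)
    (hl : forall (t k : nat) (i j : N), convex_pwa_int (l t k i j)) :
  (exists w : nat -> nat -> N -> N -> R,
      feasible E T K d0 dbar f wpast yp ym w) ->
  exists wz : nat -> nat -> N -> N -> int,
    let w := fun t k i j => (wz t k i j)%:~R : R in
    feasible E T K d0 dbar f wpast yp ym w /\
    forall w' : nat -> nat -> N -> N -> R,
      feasible E T K d0 dbar f wpast yp ym w' ->
      cost E T K f l w <= cost E T K f l w'.
Proof.
exact: (PilotHelpers.main hl).
Qed.
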